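(* Let $T$ be a decomposition tree of a distance-hereditary graph $G$, and let $v$ be an internal node of $T$ labeled $\odot$ with left child $v_l$ and right child $v_r$, such that property (P) holds at $v_l$ and at $v_r$. Then $\hat\alpha(v)=\hat\alpha(v_l)+\hat\alpha(v_r)$.
   Context: All graphs are finite, simple, undirected. For a graph $H$ and $S\subseteq V(H)$, $N_H[S]$ is $S$ together with all vertices adjacent to a vertex of $S$, and $H[S]$ is the induced subgraph. Graphs carry a ''twin set'': a single-vertex graph on $x$ has twin set $\{x\}$. For vertex-disjoint graphs $G_l,G_r$ with twin sets $TS(G_l),TS(G_r)$: the true twin operation $G_l\otimes G_r$ has vertex set $V(G_l)\cup V(G_r)$, edge set $E(G_l)\cup E(G_r)\cup\{uw: u\in TS(G_l), w\in TS(G_r)\}$ and twin set $TS(G_l)\cup TS(G_r)$; the false twin operation $G_l\odot G_r$ has vertex set $V(G_l)\cup V(G_r)$, edge set $E(G_l)\cup E(G_r)$, twin set $TS(G_l)\cup TS(G_r)$; the attachment operation $G_l\oplus G_r$ has the same vertex and edge sets as $G_l\otimes G_r$ and twin set $TS(G_l)$. A decomposition tree $T$ of $G$ is a rooted binary tree whose leaves are in bijection with $V(G)$, each internal node having a left and a right child and a label in $\{\otimes,\odot,\oplus\}$; for each node $v$ define $\hat G(v)$ and $\hat{TS}(v)$ recursively: for a leaf $x$, the single-vertex graph on $x$ with twin set $\{x\}$; for an internal node $v$ with label $\circ$ and children $v_l,v_r$, $\hat G(v)=\hat G(v_l)\circ\hat G(v_r)$ with the corresponding twin set; one requires $\hat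 G(\text{root})=G$. Then $\hat G(v)$ is the subgraph of $G$ induced by the set $\hat V(v)$ of leaves below $v$. For a node $u$ and $0\le k\le|\hat{TS}(u)|$, call $S\subseteq\hat V(u)$ $k$-feasible if $\hat V(u)\setminus\hat{TS}(u)\subseteq N_{\hat G(u)}[S]$ and there is $X\subseteq S\cap\hat{TS}(u)$ with $|X|=k$ such that $\hat G(u)[S\setminus X]$ has a perfect matching. $\hat\gamma_k(u)$ is the minimum size of a $k$-feasible set. $\hat{min}(u)=\min\{\hat\gamma_k(u):0\le k\le|\hat{TS}(u)|\}$, and $\hat\alpha(u)$, $\hat\beta(u)$ are the smallest and the largest $k$ with $\hat\gamma_k(u)=\hat{min}(u)$. Property (P) holds at $u$ if for every $0\le k\le|\hat{TS}(u)|$: $\hat\gamma_k(u)=\hat{min}(u)+\hat\alpha(u)-k$ when $k\le\hat\alpha(u)$; $\hat\gamma_k(u)=\hat{min}(u)+k-\hat\beta(u)$ when $k\ge\hat\beta(u)$; $\hat\gamma_k(u)=\hat{min}(u)$ when $\hat\alpha(u)<k<\hat\beta(u)$ and $k-\hat\alpha(u)$ is even; and $\hat\gamma_k(u)=\hat{min}(u)+1$ otherwise. *)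

(* Defs.v *)
From mathcomp Require Import all_boot.
Set Implicit Arguments. Unset Strict Implicit. Unset Printing Implicit Defensive.

Section Defs.
Variable V : finType.

Definition simple_graph (G : rel V) : Prop :=
  irreflexive G /\ symmetric G.

Definition walk_in (e : rel V) (S : {set V}) (u w : V) (n : nat) : Prop :=
  exists p : seq V, [/\ path e u p, last u p = w, size p = n & all (mem S) (u :: p)].

Definition dist_le (e : rel V) (S : {set V}) (u w : V) (n : nat) : Prop :=
  exists2 m, m <= n & walk_in e S u w m.

Definition distance_hereditary (G : rel V) : Prop :=
  forall S : {set V},
    (forall u w, u \in S -> w \in S -> exists n, walk_in G S u w n) ->
    forall u w, u \in S -> w \in S -> forall n,
      dist_le G S u w n <-> dist_le G setT u w n.

Inductive op := TrueTwin (* ⊗ *) | FalseTwin (* ⊙ *) | Attach (* ⊕ *).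

Inductive dtree :=
  | Leaf of V
  | Node of op & dtree & dtree.

Fixpoint leaves (t : dtree) : seq V :=
  match t with Leaf x => [:: x] | Node _ l r => leaves l ++ leaves r end.

Definition hatV (t : dtree) : {set V} := [set x in leaves t].

Fixpoint hatTS (t : dtree) : {set V} :=
  match t with
  | Leaf x => [set x]
  | Node TrueTwin l r => hatTS l :|: hatTS r
  | Node FalseTwin l r => hatTS l :|: hatTS r
  | Node Attach l r => hatTS l
  end.

Fixpoint hatE (t : dtree) : rel V :=
  match t with
  | Leaf _ => fun _ _ => false
  | Node FalseTwin l r => fun x y => hatE l x y || hatE r x y
  | Node _ l r => fun x y =>
      [|| hatE l x y, hatE r x y,
          (x \in hatTS l) && (y \in hatTS r) | (y \in hatTS l) && (x \in hatTS r)]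
  end.

(* T is a decomposition tree of G: leaves in bijection with V, \hat G(root) = G *)
Definition decomposition_tree (G : rel V) (T : dtree) : Prop :=
  perm_eq (leaves T) (enum V) /\ (forall x y, G x y = hatE T x y).

(* t is (the subtree rooted at) a node of T *)
Fixpoint node_of (t T : dtree) : Prop :=
  t = T \/ match T with Leaf _ => False | Node _ l r => node_of t l \/ node_of t r end.

Definition closed_nbh (t : dtree) (S : {set V}) : {set V} :=
  S :|: [set y in hatV t | [exists x in S, hatE t x y]].

Definition has_perfect_matching (t : dtree) (W : {set V}) : bool :=
  [exists M : {set {set V}},
     [forall m in M, exists a, exists b,
        [&& m == [set a; b], a != b, a \in W, b \in W & hatE t a b]]
     && [forall w in W, #|[set m in M | w \in m]| == 1]].

Definition kfeasible (t : dtree) (k : nat) (S : {set V}) : bool :=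
  [&& S \subset hatV t,
      (hatV t :\: hatTS t) \subset closed_nbh t S &
      [exists X : {set V},
         [&& X \subset S :&: hatTS t, #|X| == k & has_perfect_matching t (S :\: X)]]].

(* "infinity": strictly larger than the size of any vertex set *)
Definition infty : nat := #|V|.+1.

(* \hat\gamma_k(t); equals infty iff there is no k-feasible set *)
Definition gamma (t : dtree) (k : nat) : nat :=
  \big[minn/infty]_(S : {set V} | kfeasible t k S) #|S|.

Definition hatmin (t : dtree) : nat :=
  \big[minn/infty]_(k < #|hatTS t|.+1) gamma t k.

Definition alpha (t : dtree) : nat :=
  \big[minn/#|hatTS t|]_(k < #|hatTS t|.+1 | gamma t k == hatmin t) (k : nat).

Definition beta (t : dtree) : nat :=
  \max_(k < #|hatTS t|.+1 | gamma t k == hatmin t) (k : nat).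

Definition propP (t : dtree) : Prop :=
  forall k, k <= #|hatTS t| ->
    [/\ k <= alpha t -> gamma t k = hatmin t + (alpha t - k),
        beta t <= k -> gamma t k = hatmin t + (k - beta t),
        alpha t < k < beta t -> ~~ odd (k - alpha t) -> gamma t k = hatmin t &
        alpha t < k < beta t -> odd (k - alpha t) -> gamma t k = (hatmin t).+1].

End Defs.

(* Main.v *)
Require Import Defs.
From mathcomp Require Import all_boot.
Set Implicit Arguments. Unset Strict Implicit. Unset Printing Implicit Defensive.

Section L.
Variable V : finType.
Implicit Types t l r : dtree V.

Lemma hatV_node o l r : hatV (Node o l r) = hatV l :|: hatV r.
Proof. by apply/setP=> x; rewrite /hatV !inE /= mem_cat. Qed.

Lemma hatV_leaf (x : V) : hatV (Leaf x) = [set x].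
Proof. by apply/setP=> y; rewrite /hatV !inE. Qed.

Lemma TS_sub t : hatTS t \subset hatV t.
Proof.
elim: t => [x|o l IHl r IHr]; first by rewrite hatV_leaf.
rewrite hatV_node; case: o => /=.
- by apply: setUSS.
- by apply: setUSS.
- by apply: subset_trans IHl (subsetUl _ _).
Qed.

Lemma TS_in t x : x \in hatTS t -> x \in hatV t.
Proof. by move/(subsetP (TS_sub t)). Qed.

Lemma TS_ex t : exists x, x \in hatTS t.
Proof.
elim: t => [x|o l [a Ha] r [b Hb]]; first by exists x; rewrite inE.
by case: o => /=; exists a; rewrite ?inE ?Ha.
Qed.

Lemma E_in t a b : hatE t a b -> (a \in hatV t) && (b \in hatV t).
Proof.
elim: t a b => [x|o l IHl r IHr] a b //=.
rewrite hatV_node !in_setU.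
have H1 : hatE l a b -> [&& (a \in hatV l) || (a \in hatV r) & (b \in hatV l) || (b \in hatV r)].
  by move/IHl/andP=> [-> ->].
have H2 : hatE r a b -> [&& (a \in hatV l) || (a \in hatV r) & (b \in hatV l) || (b \in hatV r)].
  by move/IHr/andP=> [-> ->]; rewrite !orbT.
case: o.
- case/or4P=> [/H1|/H2|/andP[/TS_in-> /TS_in->]|/andP[/TS_in-> /TS_in->]] //; by rewrite !orbT.
- by case/orP=> [/H1|/H2].
- case/or4P=> [/H1|/H2|/andP[/TS_in-> /TS_in->]|/andP[/TS_in-> /TS_in->]] //; by rewrite !orbT.
Qed.

Lemma E_sym t : symmetric (hatE t).
Proof.
elim: t => [x|o l IHl r IHr] a b //=.
case: o => /=; rewrite IHl IHr //;
by case: (a \in hatTS l); case: (b \in hatTS l); case: (a \in hatTS r); case: (b \in hatTS r);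
  rewrite /= ?orbT ?orbF.
Qed.

Lemma E_l o l r a b : hatE l a b -> hatE (Node o l r) a b.
Proof. by case: o => /= ->. Qed.
Lemma E_r o l r a b : hatE r a b -> hatE (Node o l r) a b.
Proof. by case: o => /= ->; rewrite ?orbT. Qed.

Lemma uniq_node o l r : uniq (leaves (Node o l r)) ->
  [/\ uniq (leaves l), uniq (leaves r) & forall x, x \in hatV l -> x \in hatV r -> False].
Proof.
rewrite /= cat_uniq => /and3P[ul hn ur]; split=> // x; rewrite /hatV !inE => xl xr.
by move/hasP: hn; apply; exists x.
Qed.

Lemma nonisolated t y : uniq (leaves t) -> y \in hatV t -> y \notin hatTS t ->
  exists2 u, u != y & hatE t y u.
Proof.
elim: t y => [x|o l IHl r IHr] y.
  by rewrite hatV_leaf /= => _ ->.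
move/uniq_node=> [ul ur dj]; rewrite hatV_node in_setU.
case: o => /=; rewrite ?in_setU.
- case/orP=> yV /norP[yl yr].
    by have [u uy Eu] := IHl y ul yV yl; exists u; rewrite // Eu.
  by have [u uy Eu] := IHr y ur yV yr; exists u; rewrite // Eu orbT.
- case/orP=> yV /norP[yl yr].
    by have [u uy Eu] := IHl y ul yV yl; exists u; rewrite // Eu.
  by have [u uy Eu] := IHr y ur yV yr; exists u; rewrite // Eu orbT.
- case/orP=> yV yl.
    by have [u uy Eu] := IHl y ul yV yl; exists u; rewrite // Eu.
  have [a Ha] := TS_ex l.
  case yr: (y \in hatTS r).
    exists a; last by rewrite Ha !orbT.
    by apply/eqP=> ay; apply: (dj a (TS_in Ha)); rewrite ay.
  by have [u uy Eu] := IHr y ur yV (negbT yr); exists u; rewrite // Eu orbT.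
Qed.

Definition valid t (M : {set {set V}}) : bool :=
 [forall m in M, exists a, exists b, [&& m == [set a; b], a != b & hatE t a b]] &&
 [forall m1 in M, forall m2 in M, forall x, ((x \in m1) && (x \in m2)) ==> (m1 == m2)].

Lemma exists_feasible t : uniq (leaves t) -> exists S, kfeasible t 0 S.
Proof.
move=> ut.
have v0 : valid t set0.
  by apply/andP; split; apply/forallP=> m; rewrite inE.
case: (arg_maxnP (fun M : {set {set V}} => #|M|) v0) => M vM maxM.
move: vM => /andP[/forallP v1 /forallP v2].
pose C := \bigcup_(m in M) m.
have pairs : forall m, m \in M -> exists a, exists b, [/\ m = [set a; b], a != b & hatE t a b].
  move=> m mM; have /existsP[a /existsP[b /and3P[/eqP me ab Eab]]] := implyP (v1 m) mM.
  by exists a, b.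
have uniqm : forall m1 m2 x, m1 \in M -> m2 \in M -> x \in m1 -> x \in m2 -> m1 = m2.
  move=> m1 m2 x m1M m2M xm1 xm2; apply/eqP.
  have := implyP (v2 m1) m1M => /forallP/(_ m2)/implyP/(_ m2M)/forallP/(_ x)/implyP; apply.
  by rewrite xm1.
have maxC : forall y u, u != y -> hatE t y u -> y \notin C -> u \in C.
  move=> y u uy Eyu yC; apply/negPn/negP=> uC.
  have inyu : forall x m, x \in [set y; u] -> m \in M -> x \in m -> False.
    move=> x m; rewrite !inE => /orP[]/eqP-> mM xm.
      by move/negP: yC; apply; apply/bigcupP; exists m.
    by move/negP: uC; apply; apply/bigcupP; exists m.
  pose M' := [set y; u] |: M.
  have nM : [set y; u] \notin M.
    apply/negP=> yuM; apply: (inyu y [set y; u]); rewrite ?inE ?eqxx //.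
  have vM' : valid t M'.
    apply/andP; split; apply/forallP=> m; apply/implyP; rewrite in_setU1.
      case/orP=> [/eqP->|mM]; last exact: implyP (v1 m) mM.
      by apply/existsP; exists y; apply/existsP; exists u; rewrite eqxx eq_sym uy Eyu.
    move=> Hm; apply/forallP=> m2; apply/implyP; rewrite in_setU1 => Hm2.
    apply/forallP=> x; apply/implyP=> /andP[xm xm2].
    case/orP: Hm => [/eqP E1|mM]; case/orP: Hm2 => [/eqP E2|m2M].
    - by rewrite E1 E2.
    - by case: (inyu x m2) => //; rewrite -E1.
    - by case: (inyu x m) => //; rewrite -E2.
    - by rewrite (uniqm m m2 x).
  have := maxM M' vM'.
  by rewrite cardsU1 nM add1n /= ltnn.
exists C; apply/and3P; split.
- apply/subsetP=> x /bigcupP[m mM xm].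
  have [a [b [me _ Eab]]] := pairs m mM.
  by case/andP: (E_in Eab); move: xm; rewrite me !inE => /orP[]/eqP->.
- apply/subsetP=> y /setDP[yV yTS]; rewrite /closed_nbh inE.
  case yC: (y \in C) => //=.
  have [u uy Eu] := nonisolated ut yV yTS.
  rewrite inE yV /=; apply/existsP; exists u.
  by rewrite E_sym Eu andbT (maxC y) // yC.
- apply/existsP; exists set0; rewrite sub0set cards0 setD0 /=.
  apply/existsP; exists M; apply/andP; split.
    apply/forallP=> m; apply/implyP=> mM.
    have [a [b [me ab Eab]]] := pairs m mM.
    apply/existsP; exists a; apply/existsP; exists b; rewrite me eqxx ab Eab /= andbT.
    by apply/andP; split; apply/bigcupP; exists m; rewrite // me !inE eqxx ?orbT.
  apply/forallP=> w; apply/implyP=> /bigcupP[m0 m0M wm0].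
  rewrite (_ : [set m in M | w \in m] = [set m0]) ?cards1 //; apply/setP=> m; rewrite !inE.
  apply/andP/eqP => [[mM wm]|->]; last by split.
  exact: uniqm wm wm0.
Qed.

Lemma pm_wit_in t (W : {set V}) (M : {set {set V}}) m x :
  [forall m in M, exists a, exists b,
        [&& m == [set a; b], a != b, a \in W, b \in W & hatE t a b]] ->
  m \in M -> x \in m -> x \in W.
Proof.
move=> /forallP/(_ m)/implyP H mM; have /existsP[a /existsP[b]] := H mM.
by case/and5P=> /eqP-> _ aW bW _; rewrite !inE => /orP[]/eqP->.
Qed.

Lemma pm_restrict t s (W A : {set V}) :
  (forall a b, hatE t a b -> (a \in A) = (b \in A)) ->
  (forall a b, a \in A -> hatE t a b -> hatE s a b) ->
  has_perfect_matching t W -> has_perfect_matching s (W :&: A).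
Proof.
move=> side Es /existsP[M /andP[H1 H2]].
apply/existsP; exists [set m in M | m \subset A]; apply/andP; split.
  apply/forallP=> m; apply/implyP; rewrite inE => /andP[mM mA].
  have /existsP[a /existsP[b]] := implyP (forallP H1 m) mM.
  case/and5P=> /eqP me ab aW bW Eab.
  have aA : a \in A by apply: (subsetP mA); rewrite me !inE eqxx.
  have bA : b \in A by apply: (subsetP mA); rewrite me !inE eqxx orbT.
  apply/existsP; exists a; apply/existsP; exists b.
  by rewrite me eqxx ab !inE aW bW aA bA (Es a b).
apply/forallP=> w; apply/implyP; rewrite inE => /andP[wW wA].
rewrite -(eqP (implyP (forallP H2 w) wW)); apply/eqP; congr (#|pred_of_set _|).
apply/setP=> m; rewrite !inE; case mM: (m \in M) => //=.
case wm: (w \in m); rewrite ?andbF //= andbT.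
have /existsP[a /existsP[b]] := implyP (forallP H1 m) mM.
case/and5P=> /eqP me ab aW bW Eab.
have sab : (a \in A) = (b \in A) := side a b Eab.
have : (a \in A) || (b \in A) by move: wm; rewrite me !inE => /orP[]/eqP<-; rewrite wA ?orbT.
rewrite -sab orbb => aA.
by rewrite me; apply/subsetP => x; rewrite !inE => /orP[]/eqP->; rewrite -?sab.
Qed.

Lemma pm_union t l r (W1 W2 : {set V}) :
 (forall a b, hatE l a b -> hatE t a b) -> (forall a b, hatE r a b -> hatE t a b) ->
 (forall x, x \in W1 -> x \in W2 -> False) ->
 has_perfect_matching l W1 -> has_perfect_matching r W2 ->
 has_perfect_matching t (W1 :|: W2).
Proof.
move=> El Er dW /existsP[M1 /andP[A1 B1]] /existsP[M2 /andP[A2 B2]].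
apply/existsP; exists (M1 :|: M2); apply/andP; split.
  apply/forallP=> m; apply/implyP; rewrite in_setU => /orP[mM|mM].
    have /existsP[a /existsP[b]] := implyP (forallP A1 m) mM.
    case/and5P=> me ab aW bW Eab; apply/existsP; exists a; apply/existsP; exists b.
    by rewrite me ab !in_setU aW bW El.
  have /existsP[a /existsP[b]] := implyP (forallP A2 m) mM.
  case/and5P=> me ab aW bW Eab; apply/existsP; exists a; apply/existsP; exists b.
  by rewrite me ab !in_setU aW bW Er ?orbT.
apply/forallP=> w; apply/implyP; rewrite in_setU => /orP[wW|wW].
  rewrite -(eqP (implyP (forallP B1 w) wW)); apply/eqP; congr (#|pred_of_set _|).
  apply/setP=> m; rewrite !inE; case wm: (w \in m); rewrite ?andbF // !andbT.
  case m2: (m \in M2); rewrite ?orbT ?orbF //.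
  by exfalso; apply: (dW w wW); exact: pm_wit_in A2 m2 wm.
rewrite -(eqP (implyP (forallP B2 w) wW)); apply/eqP; congr (#|pred_of_set _|).
apply/setP=> m; rewrite !inE; case wm: (w \in m); rewrite ?andbF // !andbT.
case m1: (m \in M1); rewrite ?orbT ?orbF //.
by exfalso; apply: (dW w) wW; exact: pm_wit_in A1 m1 wm.
Qed.

Lemma setD_aux1 (S X A : {set V}) : (S :&: A) :\: (X :&: A) = (S :\: X) :&: A.
Proof. by apply/setP=> x; rewrite !inE; case: (x \in A); rewrite ?andbF ?andbT. Qed.

Lemma setD_aux2 (S X A : {set V}) : (S :\: A) :\: (X :\: A) = (S :\: X) :&: ~: A.
Proof. by apply/setP=> x; rewrite !inE; case: (x \in A); rewrite ?andbF ?andbT. Qed.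

Lemma setD_aux3 (S1 S2 X1 X2 : {set V}) :
  (forall x, x \in S1 -> x \in S2 -> False) -> X1 \subset S1 -> X2 \subset S2 ->
  (S1 :|: S2) :\: (X1 :|: X2) = (S1 :\: X1) :|: (S2 :\: X2).
Proof.
move=> dS s1 s2; apply/setP=> x; rewrite !inE.
move: (subsetP s1 x) (subsetP s2 x) (dS x).
case: (x \in S1); case: (x \in S2); case: (x \in X1); case: (x \in X2) => //= h1 h2 h3;
  first [by case: (h3 isT isT) | by have := h2 isT | by have := h1 isT].
Qed.

Section FT.
Variables l r : dtree V.
Hypothesis dj : forall x, x \in hatV l -> x \in hatV r -> False.
Notation t := (Node FalseTwin l r).

Lemma side_l a b : hatE t a b -> (a \in hatV l) = (b \in hatV l).
Proof.
case/orP=> E; case/andP: (E_in E) => ar br; first by rewrite ar br.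
by apply/idP/idP => [al|bl]; [case: (dj al ar) | case: (dj bl br)].
Qed.

Lemma split_feas k S : kfeasible t k S -> exists k1, exists k2,
  [/\ k = k1 + k2, kfeasible l k1 (S :&: hatV l) & kfeasible r k2 (S :\: hatV l)].
Proof.
case/and3P=> SV dom /existsP[X /and3P[XS /eqP Xk pm]].
exists #|X :&: hatV l|, #|X :\: hatV l|; split.
- by rewrite cardsID.
- apply/and3P; split.
  + exact: subsetIr.
  + apply/subsetP=> y /setDP[yV yTS].
    have : y \in closed_nbh t S.
      apply: (subsetP dom); apply/setDP; split; first by rewrite hatV_node in_setU yV.
      rewrite /= in_setU negb_or yTS /=; apply/negP => /TS_in yr; exact: dj yV yr.
    move/setUP => [yS | ].
      by apply/setUP; left; apply/setIP; split.
    rewrite in_set => /andP[_ /existsP[x /andP[xS Exy]]].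
    case/orP: Exy => [Exy|Exy]; last by case/andP: (E_in Exy) => _ yr; case: (dj yV yr).
    apply/setUP; right; rewrite in_set; apply/andP; split => //.
    apply/existsP; exists x; apply/andP; split; last exact: Exy; apply/setIP; split => //.
    by case/andP: (E_in Exy).
  + apply/existsP; exists (X :&: hatV l); rewrite eqxx /= setD_aux1; apply/andP; split.
      apply/subsetP=> x /setIP[xX xl]; have := subsetP XS x xX.
      rewrite !in_setI /= in_setU => /andP[-> /orP[->|/TS_in xr]]; rewrite ?xl //.
      by case: (dj xl xr).
    apply: pm_restrict pm.
      exact: side_l.
    move=> a b al /orP[] // E; case/andP: (E_in E) => ar _; case: (dj al ar).
- apply/and3P; split.
  + apply/subsetP=> x /setDP[xS xl]; move: (subsetP SV x xS); rewrite hatV_node in_setU.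
    by rewrite (negbTE xl).
  + apply/subsetP=> y /setDP[yV yTS].
    have yl : y \notin hatV l by apply/negP=> yl; exact: dj yl yV.
    have : y \in closed_nbh t S.
      apply: (subsetP dom); apply/setDP; split; first by rewrite hatV_node in_setU yV orbT.
      rewrite /= in_setU negb_or yTS andbT; apply/negP => /TS_in yl'; exact: dj yl' yV.
    move/setUP => [yS | ].
      by apply/setUP; left; apply/setDP; split.
    rewrite in_set => /andP[_ /existsP[x /andP[xS Exy]]].
    case/orP: Exy => [Exy|Exy]; first by case/andP: (E_in Exy) => _ yl'; rewrite yl' in yl.
    apply/setUP; right; rewrite in_set; apply/andP; split => //.
    apply/existsP; exists x; apply/andP; split; last exact: Exy; apply/setDP; split => //.
    by case/andP: (E_in Exy) => xr _; apply/negP=> xl; exact: dj xl xr.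
  + apply/existsP; exists (X :\: hatV l); rewrite eqxx /= setD_aux2; apply/andP; split.
      apply/subsetP=> x /setDP[xX xl]; have := subsetP XS x xX.
      rewrite !in_setI /= in_setU in_setD xl => /andP[-> /orP[/TS_in xl'|->]] //.
      by rewrite xl' in xl.
    apply: pm_restrict pm.
      by move=> a b /side_l; rewrite !in_setC => ->.
    move=> a b; rewrite in_setC => al /orP[] // E; case/andP: (E_in E) => al' _.
    by rewrite al' in al.
Qed.

Lemma union_feas k1 k2 S1 S2 : kfeasible l k1 S1 -> kfeasible r k2 S2 ->
  kfeasible t (k1 + k2) (S1 :|: S2) /\ #|S1 :|: S2| = #|S1| + #|S2|.
Proof.
case/and3P=> S1V dom1 /existsP[X1 /and3P[XS1 /eqP Xk1 pm1]].
case/and3P=> S2V dom2 /existsP[X2 /and3P[XS2 /eqP Xk2 pm2]].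
have dS : forall x, x \in S1 -> x \in S2 -> False.
  by move=> x /(subsetP S1V) h1 /(subsetP S2V); apply: dj.
have cU : forall A B : {set V}, (forall x, x \in A -> x \in B -> False) ->
    #|A :|: B| = #|A| + #|B|.
  move=> A B dAB; rewrite cardsU (_ : A :&: B = set0) ?cards0 ?subn0 //.
  by apply/setP=> x; rewrite !inE; apply/negP=> /andP[xa xb]; exact: dAB x xa xb.
split; last exact: cU.
apply/and3P; split.
- by rewrite hatV_node; apply: setUSS.
- apply/subsetP=> y /setDP[]; rewrite hatV_node in_setU /= in_setU negb_or.
  case/orP=> yV /andP[yl yr].
    have := subsetP dom1 y; rewrite in_setD yl yV => /(_ isT) /setUP[yS|].
      by apply/setUP; left; apply/setUP; left.
    rewrite in_set => /andP[_ /existsP[x /andP[xS Exy]]].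
    apply/setUP; right; rewrite in_set hatV_node in_setU yV /=.
    by apply/existsP; exists x; rewrite in_setU xS /=; apply/orP; left.
  have := subsetP dom2 y; rewrite in_setD yr yV => /(_ isT) /setUP[yS|].
    by apply/setUP; left; apply/setUP; right.
  rewrite in_set => /andP[_ /existsP[x /andP[xS Exy]]].
  apply/setUP; right; rewrite in_set hatV_node in_setU yV orbT /=.
  by apply/existsP; exists x; rewrite in_setU xS orbT /=; apply/orP; right.
- have sX1 : X1 \subset S1 by apply: subset_trans XS1 (subsetIl _ _).
  have sX2 : X2 \subset S2 by apply: subset_trans XS2 (subsetIl _ _).
  apply/existsP; exists (X1 :|: X2); apply/and3P; split.
  + apply/subsetP=> x /setUP[] xX.
      by have := subsetP XS1 x xX; rewrite !in_setI /= !in_setU => /andP[-> ->].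
    by have := subsetP XS2 x xX; rewrite !in_setI /= !in_setU => /andP[-> ->]; rewrite !orbT.
  + rewrite cU ?Xk1 ?Xk2 // => x /(subsetP sX1) h1 /(subsetP sX2); exact: dS.
  + rewrite setD_aux3 //; apply: pm_union pm1 pm2.
    * exact: E_l.
    * exact: E_r.
    * by move=> x /setDP[h1 _] /setDP[h2 _]; exact: dS h1 h2.
Qed.
End FT.

Lemma bigmin_le_gen (I : eqType) (rs : seq I) (P : pred I) (F : I -> nat) d i0 :
  i0 \in rs -> P i0 -> \big[minn/d]_(i <- rs | P i) F i <= F i0.
Proof.
elim: rs => // x rs IH; rewrite inE big_cons => /orP[/eqP<-|ir] Pi0.
  by rewrite Pi0 geq_minl.
by case: (P x); rewrite ?geq_min IH ?orbT.
Qed.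

Lemma gamma_le t k S : kfeasible t k S -> gamma t k <= #|S|.
Proof. by move=> H; apply: bigmin_le_gen => //; rewrite mem_index_enum. Qed.

Lemma gamma_ex t k : gamma t k < infty V -> exists S, kfeasible t k S /\ #|S| = gamma t k.
Proof.
have : (gamma t k == infty V) || [exists S, kfeasible t k S && (#|S| == gamma t k)].
  rewrite /gamma; apply: (big_ind (fun x => (x == infty V) || [exists S, kfeasible t k S && (#|S| == x)])).
  - by rewrite eqxx.
  - move=> x y hx hy; rewrite /minn; case: ifP => _; [exact: hx | exact: hy].
  - by move=> S kS; apply/orP; right; apply/existsP; exists S; rewrite kS eqxx.
case/orP=> [/eqP-> |/existsP[S /andP[kS /eqP e]]]; first by rewrite ltnn.
by move=> _; exists S.
Qed.

Lemma gamma_infty t k : gamma t k <= infty V.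
Proof.
rewrite /gamma; apply: (big_ind (fun x => x <= infty V)) => //.
- by move=> x y hx _; rewrite geq_min hx.
- by move=> S _; rewrite ltnW // ltnS max_card.
Qed.

Lemma gamma_big t k : #|hatTS t| < k -> gamma t k = infty V.
Proof.
move=> lt; rewrite /gamma big_pred0 // => S.
apply/negP=> /and3P[_ _ /existsP[X /and3P[XS /eqP Xk _]]].
have := subset_leq_card (subset_trans XS (subsetIr _ _)).
by rewrite Xk leqNgt lt.
Qed.

Lemma hatmin_le t k : k <= #|hatTS t| -> hatmin t <= gamma t k.
Proof.
move=> kn; have := @bigmin_le_gen _ (index_enum 'I_#|hatTS t|.+1) xpredT
  (fun k => gamma t k) (infty V) (Ordinal (kn : k < #|hatTS t|.+1)).
by rewrite mem_index_enum; apply.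
Qed.

Lemma hatmin_ex t : exists2 k, k <= #|hatTS t| & gamma t k = hatmin t.
Proof.
have : (hatmin t == infty V) || [exists k : 'I_#|hatTS t|.+1, gamma t k == hatmin t].
  rewrite {2}/hatmin.
  apply: (big_ind (fun x => (x == infty V) || [exists k : 'I_#|hatTS t|.+1, gamma t k == x])).
  - by rewrite eqxx.
  - move=> x y hx hy; rewrite /minn; case: ifP => _; [exact: hx | exact: hy].
  - by move=> k _; apply/orP; right; apply/existsP; exists k.
case/orP=> [/eqP e|/existsP[k /eqP e]]; last by exists k; rewrite // -ltnS.
exists 0 => //; apply/eqP; by rewrite eqn_leq hatmin_le // e gamma_infty.
Qed.

Lemma hatmin_all t k : hatmin t <= gamma t k.
Proof.
case: (leqP k #|hatTS t|) => [|lt]; first exact: hatmin_le.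
have [k0 _ <-] := hatmin_ex t; rewrite (gamma_big lt); exact: gamma_infty.
Qed.

Lemma alpha_le t k : k <= #|hatTS t| -> gamma t k = hatmin t -> alpha t <= k.
Proof.
move=> kn e; have := @bigmin_le_gen _ (index_enum 'I_#|hatTS t|.+1)
  (fun k : 'I_#|hatTS t|.+1 => gamma t k == hatmin t)
  (fun k => k : nat) #|hatTS t| (Ordinal (kn : k < #|hatTS t|.+1)).
by rewrite mem_index_enum /= e eqxx; apply.
Qed.

Lemma alpha_spec t : alpha t <= #|hatTS t| /\ gamma t (alpha t) = hatmin t.
Proof.
have : (alpha t <= #|hatTS t|) && ((alpha t == #|hatTS t|) || (gamma t (alpha t) == hatmin t)).
  rewrite /alpha.
  apply: (big_ind (fun x => (x <= #|hatTS t|) && ((x == #|hatTS t|) || (gamma t x == hatmin t)))).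
  - by rewrite leqnn eqxx.
  - move=> x y hx hy; rewrite /minn; case: ifP => _; [exact: hx | exact: hy].
  - by move=> k /eqP e; rewrite -ltnS ltn_ord e eqxx orbT.
case/andP=> an /orP[/eqP e|/eqP e]; last by [].
split=> //.
have [k0 kn e0] := hatmin_ex t.
have := alpha_le kn e0; rewrite e => nk.
by have -> : #|hatTS t| = k0 by apply/eqP; rewrite eqn_leq nk kn.
Qed.

Lemma alpha_min t k : k < alpha t -> hatmin t < gamma t k.
Proof.
move=> ka; rewrite ltn_neqAle hatmin_all andbT eq_sym; apply/eqP=> e.
have [an _] := alpha_spec t.
have := alpha_le (leq_trans (ltnW ka) an) e.
by rewrite leqNgt ka.
Qed.
End L.

Lemma node_uniq (V : finType) (N T : dtree V) : node_of N T -> uniq (leaves T) -> uniq (leaves N).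
Proof.
elim: T => [x|o l IHl r IHr] /=; first by case=> [->|[]].
case=> [->|[/IHl|/IHr]] //= h; rewrite cat_uniq => /and3P[u1 _ u2]; exact: h.
Qed.

Unset Implicit Arguments.

Theorem lemma19 (V : finType) (G : rel V) (T vl vr : dtree V) :
  simple_graph G -> distance_hereditary G -> decomposition_tree G T ->
  node_of (Node FalseTwin vl vr) T ->
  propP vl -> propP vr ->
  alpha (Node FalseTwin vl vr) = alpha vl + alpha vr.
Proof.
move=> _ _ [pT _] nd _ _.
have uT : uniq (leaves T) by rewrite (perm_uniq pT) enum_uniq.
have [ul ur dj] := uniq_node (node_uniq nd uT).
set t := Node FalseTwin vl vr.
have [S0l f0l] := exists_feasible ul.
have [S0r f0r] := exists_feasible ur.
have [al_n gl] := alpha_spec vl.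
have [ar_n gr] := alpha_spec vr.
have mlf : gamma vl (alpha vl) < infty V.
  rewrite gl; apply: leq_ltn_trans (hatmin_le (leq0n _)) _.
  by apply: leq_ltn_trans (gamma_le f0l) _; rewrite ltnS max_card.
have mrf : gamma vr (alpha vr) < infty V.
  rewrite gr; apply: leq_ltn_trans (hatmin_le (leq0n _)) _.
  by apply: leq_ltn_trans (gamma_le f0r) _; rewrite ltnS max_card.
have [Sl [fSl cSl]] := gamma_ex mlf.
have [Sr [fSr cSr]] := gamma_ex mrf.
have [fU cU] := union_feas dj fSl fSr.
set m := hatmin vl + hatmin vr.
have up : gamma t (alpha vl + alpha vr) <= m.
  by apply: leq_trans (gamma_le fU) _; rewrite cU cSl cSr gl gr.
have mV : m < infty V.
  by rewrite /m -gl -gr -cSl -cSr -cU ltnS max_card.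
have low : forall k, m + (k < alpha vl + alpha vr) <= gamma t k.
  move=> k; case: (ltnP (gamma t k) (infty V)) => [lt|ge]; last first.
    apply: leq_trans ge; apply: leq_trans (leq_add (leqnn m) (leq_b1 _)) _.
    by rewrite addn1.
  have [S [fS cS]] := gamma_ex lt.
  have [k1 [k2 [ek f1 f2]]] := split_feas dj fS.
  rewrite -cS -(cardsID (hatV vl) S).
  have h1 := leq_trans (hatmin_all vl k1) (gamma_le f1).
  have h2 := leq_trans (hatmin_all vr k2) (gamma_le f2).
  case: (ltnP k (alpha vl + alpha vr)) => [lt' | _]; last by rewrite addn0 leq_add.
  rewrite addn1 ek in lt' *.
  case: (ltnP k1 (alpha vl)) => [l1|g1].
    have s1 := leq_trans (alpha_min l1) (gamma_le f1).
    by rewrite -addSn leq_add.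
  have l2 : k2 < alpha vr.
    rewrite ltnNge; move: lt'; rewrite ltnNge; apply: contra => h; exact: leq_add g1 h.
  have s2 := leq_trans (alpha_min l2) (gamma_le f2).
  by rewrite -addnS leq_add.
have cI : #|hatTS vl :&: hatTS vr| = 0.
  apply/eqP; rewrite cards_eq0; apply/eqP/setP => x; rewrite !inE.
  by apply/negP => /andP[/TS_in a /TS_in b]; case: (dj _ a b).
have an : alpha vl + alpha vr <= #|hatTS t| by rewrite /= cardsU cI subn0 leq_add.
have hm : hatmin t = m.
  apply/eqP; rewrite eqn_leq; apply/andP; split.
    exact: leq_trans (hatmin_le an) up.
  have [k _ <-] := hatmin_ex t.
  exact: leq_trans (leq_addr _ _) (low k).
have ga : gamma t (alpha vl + alpha vr) = hatmin t.
  apply/eqP; rewrite eqn_leq hatmin_all hm up //.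
apply/eqP; rewrite eqn_leq alpha_le //=.
have [_ gt] := alpha_spec t.
rewrite leqNgt; apply/negP => lt.
by have := low (alpha t); rewrite lt gt hm addn1 ltnn.
Qed.
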